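(* There is a universal constant $K_0\le 4$ such that for any two independent real random variables $X,Y$ with finite second moments, \[ \operatorname{Var}|X+Y| \;\ge\; \frac{\max\{\operatorname{Var}|X+\mathbb{E}Y|,\ \operatorname{Var}|Y+\mathbb{E}X|\}}{K_0}. \]
   Context: $\operatorname{Var} Z=\mathbb{E}[Z^2]-(\mathbb{E}Z)^2$. *)

(* Defs.v *)
From HB Require Import structures.
From mathcomp Require Import all_boot all_order all_algebra.
From mathcomp Require Import all_classical all_reals all_analysis.
Set Implicit Arguments. Unset Strict Implicit. Unset Printing Implicit Defensive.
Import Order.TTheory GRing.Theory Num.Theory.
Local Open Scope classical_set_scope.
Local Open Scope ring_scope.

Definition independent_RV2 {d} {T : measurableType d} {R : realType}
  (P : probability T R) (X Y : {RV P >-> R}) : Prop :=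
  forall A B : set R, measurable A -> measurable B ->
    P (X @^-1` A `&` Y @^-1` B) = (P (X @^-1` A) * P (Y @^-1` B))%E.

(* Main.v *)
Require Import Defs.
From HB Require Import structures.
From mathcomp Require Import all_boot all_order all_algebra.
From mathcomp Require Import all_classical all_reals all_analysis.
From mathcomp Require Import measurable_realfun.
From mathcomp Require Import ring lra.
Import Order.TTheory GRing.Theory Num.Theory.
Local Open Scope classical_set_scope.
Local Open Scope ring_scope.

Section joint.
Context d (T : measurableType d) (R : realType) (P : probability T R)
  (X Y : {RV P >-> R}).
Definition XYpair := fun w => (X w, Y w).
Lemma mXYpair : measurable_fun setT XYpair.
Proof. exact: measurable_fun_pair. Qed.
HB.instance Definition _ := isMeasurableFun.Build _ _ _ _ XYpair mXYpair.

Lemma joint_law : independent_RV2 X Y -> forall A, measurable A ->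
  ((distribution P X \x distribution P Y) A = distribution P XYpair A)%E.
Proof.
move=> iXY; apply: product_measure_unique => A B mA mB.
rewrite /distribution /pushforward /=.
exact: iXY.
Qed.
End joint.

Section fub.
Context d (T : measurableType d) (R : realType) (P : probability T R)
  (X Y : {RV P >-> R}).
Local Open Scope ereal_scope.
Lemma E_pair (f : (R * R)%type -> \bar R) : independent_RV2 X Y ->
  measurable_fun setT f -> (forall z, 0 <= f z) ->
  \int[P]_w f (X w, Y w) =
  \int[distribution P X]_x \int[distribution P Y]_y f (x, y).
Proof.
move=> iXY mf f0.
have -> : \int[P]_w f (X w, Y w) = \int[P]_w (f \o @XYpair _ _ _ P X Y) w by [].
rewrite -ge0_integral_distribution //.
rewrite -(fubini_tonelli1 f) //.
apply: eq_measure_integral => A mA _.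
by symmetry; apply: joint_law.
Qed.
End fub.

Import numFieldNormedType.Exports.
Set Implicit Arguments. Unset Strict Implicit. Unset Printing Implicit Defensive.

Section mfun_tac.
Context (R : realType).
Implicit Types (f g : R -> R) (c k y : R).
Lemma mD (f g : R -> R) : measurable_fun setT f -> measurable_fun setT g -> measurable_fun setT (fun y => f y + g y).
Proof. exact: measurable_funD. Qed.
Lemma mN (f : R -> R) : measurable_fun setT f -> measurable_fun setT (fun y => - f y).
Proof. by move=> mf; apply: measurableT_comp => //; exact: measurable_funN. Qed.
Lemma mM (f g : R -> R) : measurable_fun setT f -> measurable_fun setT g -> measurable_fun setT (fun y => f y * g y).
Proof. exact: measurable_funM. Qed.
Lemma mA (f : R -> R) : measurable_fun setT f -> measurable_fun setT (fun y => `|f y|).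
Proof. by move=> mf; apply: measurableT_comp => //; exact: normr_measurable. Qed.
Lemma mX (f : R -> R) n : measurable_fun setT f -> measurable_fun setT (fun y => f y ^+ n).
Proof. exact: measurable_funX. Qed.
Lemma mC (c : R) : measurable_fun setT (fun y : R => c).
Proof. exact: measurable_cst. Qed.
Lemma mI : measurable_fun setT (fun y : R => y).
Proof. exact: measurable_id. Qed.

Lemma lip_cont (f : R -> R) : (forall x y, `|f x - f y| <= `|x - y|) -> continuous f.
Proof.
move=> fL x; apply/(@cvgrPdist_lt _ _ _ (nbhs x)) => e e0; near=> z.
rewrite (le_lt_trans (fL _ _))//.
Unshelve. all: by end_near. Qed.

Lemma lip_meas (f : R -> R) : (forall x y, `|f x - f y| <= `|x - y|) -> measurable_fun setT f.
Proof. by move=> fL; apply: continuous_measurable_fun; exact: lip_cont. Qed.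

Definition lin (f : R -> R) := measurable_fun setT f /\
  exists c, forall y, `|f y| <= c * (1 + `|y|).
Definition quad (f : R -> R) := measurable_fun setT f /\
  exists c, forall y, `|f y| <= c * (1 + y ^+ 2).

Lemma lin_c_ge0 f c : (forall y, `|f y| <= c * (1 + `|y|)) -> 0 <= c.
Proof.
move=> h; have := h 0; rewrite normr0 addr0 mulr1 => h0.
exact: le_trans h0.
Qed.

Lemma quad_c_ge0 f c : (forall y, `|f y| <= c * (1 + y ^+ 2)) -> 0 <= c.
Proof.
move=> h; have := h 0; rewrite expr0n /= addr0 mulr1 => h0.
exact: le_trans h0.
Qed.

Lemma linC c : lin (fun _ => c).
Proof.
split; first exact: mC.
exists `|c| => y; rewrite -[X in X <= _]mulr1 ler_wpM2l//.
by rewrite lerDl.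
Qed.

Lemma linI : lin (fun y => y).
Proof.
split; first exact: mI.
by exists 1 => y; rewrite mul1r lerDr.
Qed.

Lemma linD f g : lin f -> lin g -> lin (fun y => f y + g y).
Proof.
move=> [mf [c hc]] [mg [c' hc']]; split; first exact: mD.
exists (c + c') => y; rewrite mulrDl (le_trans (ler_normD _ _))//.
exact: lerD.
Qed.

Lemma linN f : lin f -> lin (fun y => - f y).
Proof.
move=> [mf [c hc]]; split; first exact: mN.
by exists c => y; rewrite normrN.
Qed.

Lemma linZ k f : lin f -> lin (fun y => k * f y).
Proof.
move=> [mf [c hc]]; split; first exact: mM (mC _) mf.
exists (`|k| * c) => y; rewrite normrM -mulrA ler_wpM2l//.
Qed.

Lemma linA f : lin f -> lin (fun y => `|f y|).
Proof.
move=> [mf [c hc]]; split; first exact: mA.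
by exists c => y; rewrite normr_id.
Qed.

Lemma linM f g : lin f -> lin g -> quad (fun y => f y * g y).
Proof.
move=> [mf [c hc]] [mg [c' hc']]; split; first exact: mM.
have c0 := lin_c_ge0 hc; have c'0 := lin_c_ge0 hc'.
exists (2 * (c * c')) => y; rewrite normrM.
apply: (le_trans (ler_pM _ _ (hc y) (hc' y))) => //.
have h := mulr_ge0 (mulr_ge0 c0 c'0) (sqr_ge0 (1 - `|y|)).
rewrite -(real_normK (num_real y)).
nra.
Qed.

Lemma linQ f : lin f -> quad f.
Proof.
move=> [mf [c hc]]; split => //.
exists (2 * c) => y; apply: (le_trans (hc y)).
have c0 := lin_c_ge0 hc.
have h := mulr_ge0 c0 (sqr_ge0 (1 - `|y|)).
rewrite -(real_normK (num_real y)).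
nra.
Qed.

Lemma quadD f g : quad f -> quad g -> quad (fun y => f y + g y).
Proof.
move=> [mf [c hc]] [mg [c' hc']]; split; first exact: mD.
exists (c + c') => y; rewrite mulrDl (le_trans (ler_normD _ _))//.
exact: lerD.
Qed.

Lemma quadN f : quad f -> quad (fun y => - f y).
Proof.
move=> [mf [c hc]]; split; first exact: mN.
by exists c => y; rewrite normrN.
Qed.

Lemma quadZ k f : quad f -> quad (fun y => k * f y).
Proof.
move=> [mf [c hc]]; split; first exact: mM (mC _) mf.
exists (`|k| * c) => y; rewrite normrM -mulrA ler_wpM2l//.
Qed.

End mfun_tac.

Section integ.
Context (R : realType) (Q : probability R R).
Implicit Types (f g : R -> R) (c k y : R).
Hypothesis Q2 : Q.-integrable setT (EFin \o (fun y : R => y ^+ 2)).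

Definition I f := Rintegral Q setT f.

Lemma quad_int f : quad f -> Q.-integrable setT (EFin \o f).
Proof.
move=> [mf [c hc]].
have gi : Q.-integrable setT (EFin \o (fun y => c * (1 + y ^+ 2))).
  have -> : (EFin \o (fun y => c * (1 + y ^+ 2))) =
    ((EFin \o cst c) \+ (fun y => c%:E * (EFin \o (fun y : R => (y ^+ 2)%R)) y))%E.
    by apply/funext => y /=; rewrite mulrDr mulr1 EFinD EFinM.
  apply: integrableD => //; first exact: finite_measure_integrable_cst.
  exact: integrableZl.
apply: le_integrable gi => //; first exact/measurable_EFinP.
move=> y _ /=; rewrite lee_fin (le_trans (hc y))//.
exact: ler_norm.
Qed.

Lemma I_D f g : quad f -> quad g -> I (fun y => f y + g y) = I f + I g.
Proof. by move=> qf qg; rewrite /I RintegralD//; exact: quad_int. Qed.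

Lemma I_B f g : quad f -> quad g -> I (fun y => f y - g y) = I f - I g.
Proof. by move=> qf qg; rewrite /I RintegralB//; exact: quad_int. Qed.

Lemma I_Z k f : quad f -> I (fun y => k * f y) = k * I f.
Proof. by move=> qf; rewrite /I RintegralZl//; exact: quad_int. Qed.

Lemma I_C c : I (fun _ => c) = c.
Proof. rewrite /I Rintegral_cst//. have -> : fine (Q setT) = 1 by rewrite probability_setT. by rewrite mulr1. Qed.

Lemma I_le f g : quad f -> quad g -> (forall y, f y <= g y) -> I f <= I g.
Proof. by move=> qf qg fg; rewrite /I le_Rintegral//; exact: quad_int. Qed.

Lemma I_N f : quad f -> I (fun y => - f y) = - I f.
Proof.
move=> qf; rewrite -mulN1r -I_Z //; congr I; apply/funext => y.
by rewrite mulN1r.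
Qed.

Lemma I_ext f g : (forall y, f y = g y) -> I f = I g.
Proof. by move=> fg; congr I; apply/funext. Qed.

End integ.

Section tacs.
Context (R : realType).
Implicit Types (f g : R -> R).
Lemma quadX2 f : lin f -> quad (fun y => f y ^+ 2).
Proof. move=> lf; have -> : (fun y => f y ^+ 2) = (fun y => f y * f y) by apply/funext => y; rewrite expr2. exact: linM. Qed.
End tacs.

Ltac lint := repeat first [ assumption | apply: linD | apply: linN | apply: linZ | apply: linA | apply: linC | apply: linI ].
Ltac quadt := repeat first [ assumption | apply: quadD | apply: quadN | apply: quadZ | apply: quadX2 | apply: linM | apply: linQ ]; lint.

Section IEFin.
Context (R : realType) (Q : probability R R).
Hypothesis Q2 : Q.-integrable setT (EFin \o (fun y : R => y ^+ 2)).
Lemma I_EFin (f : R -> R) : quad f -> (\int[Q]_y (f y)%:E)%E = (I Q f)%:E.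
Proof.
by move=> qf; rewrite /I /Rintegral fineK//; exact: integrable_fin_num (quad_int Q2 qf).
Qed.
End IEFin.

Section real_facts.
Context (R : realType).
Implicit Types (x y E m : R).

Lemma abs_cases x : (`|x| = x /\ 0 <= x) \/ (`|x| = - x /\ x <= 0).
Proof.
have [h|h] := leP 0 x; first by left; rewrite ger0_norm.
by right; rewrite ltr0_norm// ; split => //; exact: ltW.
Qed.

Lemma pw1 x x' y E : x' <= x ->
  Num.min ((x - x') ^+ 2) ((E - (x - x')) ^+ 2) <=
  (`|x + y| - `|x' + y|) ^+ 2 + (`|x + y| + `|x' + y| - E) ^+ 2.
Proof.
move=> hx; rewrite ge_min.
case: (abs_cases (x + y)) => [[-> ha]|[-> ha]];
case: (abs_cases (x' + y)) => [[-> hb]|[-> hb]].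
- apply/orP; left; rewrite (_ : x + y - (x' + y) = x - x'); last by ring.
  by rewrite lerDl sqr_ge0.
- apply/orP; right; rewrite (_ : x + y + - (x' + y) - E = - (E - (x - x'))); last by ring.
  by rewrite sqrrN lerDr sqr_ge0.
- have e : x - x' = 0 by lra.
  apply/orP; left; rewrite e expr0n /=.
  by rewrite addr_ge0// sqr_ge0.
- apply/orP; left; rewrite (_ : - (x + y) - - (x' + y) = - (x - x')); last by ring.
  by rewrite sqrrN lerDl sqr_ge0.
Qed.

Lemma pw2 x x' y : x' <= x ->
  `|(2 * y + x + x') - (`|x + y| - `|x' + y|)| <= `|x + y| + `|x' + y| - (x - x').
Proof.
move=> hx.
case: (abs_cases (x + y)) => [[-> ha]|[-> ha]];
case: (abs_cases (x' + y)) => [[-> hb]|[-> hb]].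
- rewrite (_ : 2 * y + x + x' - (x + y - (x' + y)) = 2 * (x' + y)); last by ring.
  rewrite ger0_norm; lra.
- rewrite (_ : 2 * y + x + x' - (x + y - - (x' + y)) = 0); last by ring.
  rewrite normr0; lra.
- rewrite (_ : 2 * y + x + x' - (- (x + y) - (x' + y)) = 4 * y + 2 * x + 2 * x'); last by ring.
  have -> : x' = x by lra.
  have -> : y = - x by lra.
  rewrite (_ : 4 * - x + 2 * x + 2 * x = 0); last by ring.
  rewrite normr0; lra.
- rewrite (_ : 2 * y + x + x' - (- (x + y) - - (x' + y)) = 2 * (x + y)); last by ring.
  rewrite ler0_norm; lra.
Qed.

Lemma pw3 x x' m : (`|x + m| - `|x' + m|) ^+ 2 <= (x - x') ^+ 2.
Proof.
have := ler_dist_dist (x + m) (x' + m).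
rewrite (_ : x + m - (x' + m) = x - x'); last by ring.
move=> h; rewrite -real_normK ?realB ?num_real// -[X in _ <= X]real_normK ?num_real//.
by rewrite lerXn2r ?nnegrE.
Qed.

Lemma pw4 x x' m : `| `|x + m| - `|x' + m| | <= `|x + x' + 2 * m|.
Proof.
by rewrite (_ : x + x' + 2 * m = (x + m) + (x' + m)) ?ler_dist_normD//; ring.
Qed.
End real_facts.

Section pointwise.
Context (R : realType) (Q : probability R R).
Hypothesis Q2 : Q.-integrable setT (EFin \o (fun y : R => y ^+ 2)).
Local Notation I := (I Q).
Definition mQ := I (fun y => y).
Definition HQ x := I (fun y => `|x + y|).
Definition GQ x := I (fun y => (x + y) ^+ 2).

Lemma I_Dq f g : quad f -> quad g -> I (fun y => f y + g y) = I f + I g.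
Proof. exact: I_D. Qed.

Lemma PW_le x x' : x' <= x ->
  (`|x + mQ| - `|x' + mQ|) ^+ 2 <= 4 * (GQ x + GQ x' - 2 * (HQ x * HQ x')).
Proof.
move=> hx.
set Es := HQ x + HQ x'.
set ED := HQ x - HQ x'.
set del := x - x'.
have eEs : I (fun y => `|x + y| + `|x' + y|) = Es.
  by rewrite I_D //; quadt.
have eED : I (fun y => `|x + y| - `|x' + y|) = ED.
  by rewrite I_B //; quadt.
have J : Num.min (del ^+ 2) ((Es - del) ^+ 2) <= 2 * GQ x + 2 * GQ x' - Es ^+ 2.
  have -> : 2 * GQ x + 2 * GQ x' - Es ^+ 2 =
     I (fun y => (`|x + y| - `|x' + y|) ^+ 2 + (`|x + y| + `|x' + y| - Es) ^+ 2).
    have pt : forall y, (`|x + y| - `|x' + y|) ^+ 2 + (`|x + y| + `|x' + y| - Es) ^+ 2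
       = (2 * (x + y) ^+ 2 + 2 * (x' + y) ^+ 2) + ((- (2 * Es)) * (`|x + y| + `|x' + y|) + Es ^+ 2).
      move=> y; rewrite -(real_normK (num_real (x + y))) -(real_normK (num_real (x' + y))).
      ring.
    rewrite (I_ext _ pt) I_D //; [|quadt|quadt].
    rewrite I_D //; [|quadt|quadt].
    rewrite I_D //; [|quadt|quadt].
    rewrite I_Z //; [|quadt].
    rewrite I_Z //; [|quadt].
    rewrite I_Z //; [|quadt].
    rewrite eEs I_C /GQ; ring.
  rewrite -[X in X <= _](I_C Q).
  apply: (I_le Q2); [quadt|quadt|].
  move=> y; exact: pw1.
have Kd : `|2 * mQ + x + x' - ED| <= Es - del.
  have e1 : I (fun y => (2 * y + x + x') - (`|x + y| - `|x' + y|)) = 2 * mQ + x + x' - ED.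
    rewrite I_B //; [|quadt|quadt].
    rewrite eED I_D //; [|quadt|quadt].
    rewrite I_D //; [|quadt|quadt].
    by rewrite I_Z //; [rewrite !I_C|quadt].
  have e2 : I (fun y => `|x + y| + `|x' + y| - (x - x')) = Es - del.
    by rewrite I_B //; [rewrite eEs I_C|quadt|quadt].
  rewrite -e1 -e2 ler_norml; apply/andP; split.
    rewrite -I_N //; last by quadt.
    apply: (I_le Q2); [quadt|quadt|] => y.
    by have := pw2 y hx; rewrite ler_norml => /andP[].
  apply: (I_le Q2); [quadt|quadt|] => y.
  by have := pw2 y hx; rewrite ler_norml => /andP[].
have K3 : (`|x + mQ| - `|x' + mQ|) ^+ 2 <= del ^+ 2 := pw3 x x' mQ.
have K4 : `| `|x + mQ| - `|x' + mQ| | <= `|x + x' + 2 * mQ| := pw4 x x' mQ.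
have K5 : `| `|x + mQ| - `|x' + mQ| | <= `|ED| + (Es - del).
  apply: (le_trans K4).
  have -> : x + x' + 2 * mQ = (2 * mQ + x + x' - ED) + ED by ring.
  by rewrite (le_trans (ler_normD _ _))// addrC lerD2l.
set JJ := 2 * GQ x + 2 * GQ x' - Es ^+ 2.
move: J; rewrite ge_min => /orP J.
have K6 : (`|x + mQ| - `|x' + mQ|) ^+ 2 <= 2 * ED ^+ 2 + 2 * JJ.
  have [hm|hm] := leP (del ^+ 2) ((Es - del) ^+ 2).
    have : del ^+ 2 <= JJ by case: J => // h; exact: le_trans h.
    by have := sqr_ge0 ED; have := sqr_ge0 del; lra.
  have : (Es - del) ^+ 2 <= JJ by case: J => // h; exact: le_trans (ltW hm) h.
  move=> hJ.
  have h0 : 0 <= `| `|x + mQ| - `|x' + mQ| | := normr_ge0 _.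
  have h1 : `| `|x + mQ| - `|x' + mQ| | ^+ 2 <= (`|ED| + (Es - del)) ^+ 2.
    by rewrite lerXn2r ?nnegrE// (le_trans h0).
  rewrite real_normK ?num_real// in h1.
  have h2 : (`|ED| + (Es - del)) ^+ 2 <= 2 * ED ^+ 2 + 2 * (Es - del) ^+ 2.
    rewrite -(real_normK (num_real ED)).
    have := sqr_ge0 (`|ED| - (Es - del)); nra.
  lra.
have -> : 4 * (GQ x + GQ x' - 2 * (HQ x * HQ x')) =
  2 * ED ^+ 2 + 2 * JJ by rewrite /JJ /ED /Es; ring.
lra.
Qed.

Lemma PW x x' :
  (`|x + mQ| - `|x' + mQ|) ^+ 2 <= 4 * (GQ x + GQ x' - 2 * (HQ x * HQ x')).
Proof.
have [h|h] := leP x' x; first exact: PW_le.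
have := PW_le (ltW h).
have -> : (`|x' + mQ| - `|x + mQ|) ^+ 2 = (`|x + mQ| - `|x' + mQ|) ^+ 2.
  by rewrite -sqrrN opprB.
by rewrite (addrC (GQ x')) (mulrC (HQ x')).
Qed.
End pointwise.

Section HG.
Context (R : realType) (Q : probability R R).
Hypothesis Q2 : Q.-integrable setT (EFin \o (fun y : R => y ^+ 2)).

Lemma HQ_lip x x' : `|HQ Q x - HQ Q x'| <= `|x - x'|.
Proof.
rewrite /HQ -I_B //; try quadt.
rewrite ler_norml; apply/andP; split.
  rewrite -(I_C Q (- `|x - x'|)).
  apply: (I_le Q2); [quadt|quadt|] => y.
  have := ler_dist_dist (x + y) (x' + y).
  rewrite (_ : x + y - (x' + y) = x - x'); last by ring.
  by rewrite ler_norml => /andP[].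
rewrite -(I_C Q (`|x - x'|)).
apply: (I_le Q2); [quadt|quadt|] => y.
have := ler_dist_dist (x + y) (x' + y).
rewrite (_ : x + y - (x' + y) = x - x'); last by ring.
by rewrite ler_norml => /andP[].
Qed.

Lemma HQ_lin : lin (HQ Q).
Proof.
split; first by apply: lip_meas; exact: HQ_lip.
have a0 : 0 <= I Q (fun y => `|y|).
  by rewrite -(I_C Q 0); apply: (I_le Q2); [quadt|quadt|] => y.
exists (1 + I Q (fun y => `|y|)) => x.
have h0 : 0 <= HQ Q x by rewrite /HQ -(I_C Q 0); apply: (I_le Q2); [quadt|quadt|] => y.
rewrite ger0_norm //.
have : HQ Q x <= `|x| + I Q (fun y => `|y|).
  rewrite /HQ -(I_C Q `|x|) -I_D //; try quadt.
  apply: (I_le Q2); [quadt|quadt|] => y; exact: ler_normD.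
have := normr_ge0 x; nra.
Qed.

Lemma GQ_eq x : GQ Q x = x ^+ 2 + (2 * mQ Q) * x + I Q (fun y => y ^+ 2).
Proof.
rewrite /GQ (I_ext _ (fun y => (_ : (x + y) ^+ 2 = (x ^+ 2 + (2 * x) * y) + y ^+ 2))); last first.
  by move=> y; ring.
rewrite I_D //; try quadt.
rewrite I_D //; try quadt.
rewrite I_Z //; try quadt.
by rewrite I_C /mQ; ring.
Qed.

Lemma GQ_quad : quad (GQ Q).
Proof.
have -> : GQ Q = fun x => x ^+ 2 + (2 * mQ Q) * x + I Q (fun y => y ^+ 2).
  by apply/funext => x; exact: GQ_eq.
quadt.
Qed.
End HG.

Section main.
Context (R : realType) (M Q : probability R R).
Hypothesis M2 : M.-integrable setT (EFin \o (fun y : R => y ^+ 2)).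
Hypothesis Q2 : Q.-integrable setT (EFin \o (fun y : R => y ^+ 2)).
Local Notation m := (mQ Q).
Local Notation H := (HQ Q).
Local Notation G := (GQ Q).

Lemma main_ineq :
  I M (fun x => (x + m) ^+ 2) - (I M (fun x => `|x + m|)) ^+ 2 <=
  4 * (I M G - (I M H) ^+ 2).
Proof.
have hl := HQ_lin Q2.
have hq := GQ_quad Q2.
set A2 := I M (fun x => (x + m) ^+ 2).
set A1 := I M (fun x => `|x + m|).
set IG := I M G.
set IH := I M H.
have step1 : forall x', A2 - 2 * `|x' + m| * A1 + (x' + m) ^+ 2 <=
    4 * (IG + G x' - 2 * (H x' * IH)).
  move=> x'.
  have e1 : I M (fun x => (`|x + m| - `|x' + m|) ^+ 2) = A2 - 2 * `|x' + m| * A1 + (x' + m) ^+ 2.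
    rewrite (I_ext _ (fun x => (_ : (`|x + m| - `|x' + m|) ^+ 2 =
      ((x + m) ^+ 2 + (- (2 * `|x' + m|)) * `|x + m|) + (x' + m) ^+ 2))); last first.
      move=> x; rewrite -(real_normK (num_real (x + m))) -(real_normK (num_real (x' + m))).
      ring.
    rewrite I_D //; try quadt.
    rewrite I_D //; try quadt.
    rewrite I_Z //; try quadt.
    by rewrite I_C /A1 /A2; ring.
  have e2 : I M (fun x => 4 * (G x + G x' - 2 * (H x * H x'))) =
      4 * (IG + G x' - 2 * (H x' * IH)).
    rewrite (I_ext _ (fun x => (_ : 4 * (G x + G x' - 2 * (H x * H x')) =
      (4 * G x + (- (8 * H x')) * H x) + 4 * G x'))); last first.
      by move=> x; ring.
    rewrite I_D //; try quadt.
    rewrite I_D //; try quadt.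
    rewrite I_Z //; try quadt.
    rewrite I_Z //; try quadt.
    by rewrite I_C /IG /IH; ring.
  have hh : I M (fun x => (`|x + m| - `|x' + m|) ^+ 2) <=
      I M (fun x => 4 * (G x + G x' - 2 * (H x * H x'))).
    by apply: (I_le M2); [quadt|quadt|] => x; exact: PW.
  rewrite e1 e2 in hh; exact: hh.
have e3 : I M (fun x' => A2 - 2 * `|x' + m| * A1 + (x' + m) ^+ 2) = A2 - 2 * A1 * A1 + A2.
  rewrite (I_ext _ (fun x' => (_ : A2 - 2 * `|x' + m| * A1 + (x' + m) ^+ 2 =
    (A2 + (- (2 * A1)) * `|x' + m|) + (x' + m) ^+ 2))); last first.
    by move=> x; ring.
  rewrite I_D //; try quadt.
  rewrite I_D //; try quadt.
  rewrite I_Z //; try quadt.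
  by rewrite I_C -/A1 -/A2; ring.
have e4 : I M (fun x' => 4 * (IG + G x' - 2 * (H x' * IH))) = 4 * (IG + IG - 2 * (IH * IH)).
  rewrite (I_ext _ (fun x' => (_ : 4 * (IG + G x' - 2 * (H x' * IH)) =
    (4 * IG + 4 * G x') + (- (8 * IH)) * H x'))); last first.
    by move=> x; ring.
  rewrite I_D //; try quadt.
  rewrite I_D //; try quadt.
  rewrite I_Z //; try quadt.
  rewrite I_Z //; try quadt.
  rewrite I_Z //; try quadt. by rewrite I_C /IG /IH; ring.
have h : I M (fun x' => A2 - 2 * `|x' + m| * A1 + (x' + m) ^+ 2) <=
    I M (fun x' => 4 * (IG + G x' - 2 * (H x' * IH))).
  by apply: (I_le M2); [quadt|quadt|exact: step1].
rewrite e3 e4 in h.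
rewrite !expr2; lra.
Qed.
End main.

Section final.
Context d (T : measurableType d) (R : realType) (P : probability T R).

Lemma dist2 (X : {RV P >-> R}) : (X : T -> R) \in Lfun P 2%:E ->
  (distribution P X).-integrable setT (EFin \o (fun y : R => y ^+ 2)).
Proof.
move=> X2; have := Lfun2_integrable_sqr X2 => hi.
have mf : measurable_fun setT (EFin \o (fun y : R => y ^+ 2)).
  by apply/measurable_EFinP; apply: mX; apply: mI.
have := @integrable_pushforward _ _ _ _ _ X (measurable_funP X) P setT _ mf.
rewrite preimage_setT; apply => //.
Qed.

End final.

Lemma Lfun_norm2 d (T : measurableType d) (R : realType) (mu : {measure set T -> \bar R})
  (f : T -> R) : f \in Lfun mu 2%:E -> (fun x => `|f x|) \in Lfun mu 2%:E.
Proof.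
case/andP; rewrite !inE/= => mf finf; apply/andP; split.
  by rewrite inE/=; exact: measurableT_comp.
rewrite inE/=/finite_norm.
under [X in ('N[_]__[X])%E]eq_fun => x do rewrite -abse_EFin.
by rewrite Lnorm_abse.
Qed.

Section final2.
Context d (T : measurableType d) (R : realType) (P : probability T R).
Variable X : {RV P >-> R}.
Hypothesis X2 : (X : T -> R) \in Lfun P 2%:E.

Lemma comp_int (f : R -> R) : quad f -> P.-integrable setT (EFin \o (f \o X)).
Proof.
move=> [mf [c hc]].
have gi : P.-integrable setT (EFin \o (fun w => c * (1 + X w ^+ 2))).
  have -> : (EFin \o (fun w => c * (1 + X w ^+ 2))) =
    ((EFin \o cst c) \+ (fun w => c%:E * (EFin \o (fun w => (X w ^+ 2)%R)) w))%E.
    by apply/funext => w /=; rewrite mulrDr mulr1 EFinD EFinM.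
  apply: integrableD => //; first exact: finite_measure_integrable_cst.
  apply: integrableZl => //; exact: Lfun2_integrable_sqr.
apply: le_integrable gi => //.
  by apply/measurable_EFinP; apply: measurableT_comp.
move=> w _ /=; rewrite lee_fin (le_trans (hc (X w)))//.
exact: ler_norm.
Qed.

Lemma E_comp (f : R -> R) : quad f -> ('E_P[f \o X] = (I (distribution P X) f)%:E)%E.
Proof.
move=> qf; rewrite unlock.
have -> : (\int[P]_w ((f \o X) w)%:E)%E = (\int[P]_w ((EFin \o f) \o X) w)%E by [].
rewrite -integral_distribution //.
  exact: (I_EFin (dist2 X2) qf).
- by apply/measurable_EFinP; case: qf.
- exact: comp_int.
Qed.
End final2.

Section final3.
Context d (T : measurableType d) (R : realType) (P : probability T R).
Variables X Y : {RV P >-> R}.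
Hypothesis X2 : (X : T -> R) \in Lfun P 2%:E.
Hypothesis Y2 : (Y : T -> R) \in Lfun P 2%:E.
Local Open Scope ereal_scope.

Lemma meanE : fine 'E_P[Y] = mQ (distribution P Y).
Proof.
have -> : 'E_P[Y] = 'E_P[(fun y : R => y) \o Y] by [].
by rewrite (E_comp Y2) //; quadt.
Qed.

Lemma V1 (c : R) : 'V_P[fun w => `|X w + c|%R] =
  (I (distribution P X) (fun x => (x + c) ^+ 2) - (I (distribution P X) (fun x => `|x + c|)) ^+ 2)%:E.
Proof.
rewrite varianceE; last first.
  have : (X \+ cst c)%R \in Lfun P 2%:E.
    by apply: rpredD => //; [exact: lee1n | move=> h; exact: Lfun_cst].
  by move/Lfun_norm2.
have -> : 'E_P[(fun w => `|X w + c|%R) ^+ 2] = 'E_P[(fun x => (x + c) ^+ 2)%R \o X].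
  congr expectation; apply/funext => w /=.
  by rewrite -(real_normK (num_real (X w + c))).
have -> : 'E_P[fun w => `|X w + c|%R] = 'E_P[(fun x => `|x + c|)%R \o X] by [].
rewrite !(E_comp X2); [|quadt|quadt].
by rewrite -EFin_expe -EFinB.
Qed.

End final3.

Section final4.
Context d (T : measurableType d) (R : realType) (P : probability T R).
Variables X Y : {RV P >-> R}.
Hypothesis iXY : independent_RV2 X Y.
Hypothesis X2 : (X : T -> R) \in Lfun P 2%:E.
Hypothesis Y2 : (Y : T -> R) \in Lfun P 2%:E.
Local Open Scope ereal_scope.

Lemma mpair (h : R -> R) : measurable_fun setT h ->
  measurable_fun setT (fun z : (R * R)%type => (h (z.1 + z.2)%R)%:E).
Proof.
move=> mh; apply/measurable_EFinP; apply: measurableT_comp => //.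
by apply: measurable_funD; [exact: measurable_fst|exact: measurable_snd].
Qed.


Lemma V2 : 'V_P[fun w => `|X w + Y w|%R] =
  (I (distribution P X) (GQ (distribution P Y)) -
   (I (distribution P X) (HQ (distribution P Y))) ^+ 2)%:E.
Proof.
have hX := dist2 X2; have hY := dist2 Y2.
rewrite varianceE; last first.
  have : (X \+ Y)%R \in Lfun P 2%:E.
    by apply: rpredD => //; exact: lee1n.
  by move/Lfun_norm2.
have -> : 'E_P[(fun w => `|X w + Y w|%R) ^+ 2] =
    \int[P]_w (fun z : (R * R)%type => (((z.1 + z.2) ^+ 2)%R)%:E) (X w, Y w).
  rewrite unlock; apply: eq_integral => w _ /=.
  by rewrite -(real_normK (num_real (X w + Y w))).
have -> : 'E_P[fun w => `|X w + Y w|%R] =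
    \int[P]_w (fun z : (R * R)%type => (`|z.1 + z.2|%R)%:E) (X w, Y w).
  by rewrite unlock.
rewrite (@E_pair _ _ _ P X Y _ iXY (@mpair (fun t => t ^+ 2)%R ltac:(by apply: mX; apply: mI))); last first.
  by move=> z; rewrite lee_fin sqr_ge0.
rewrite (@E_pair _ _ _ P X Y _ iXY (@mpair (fun t => `|t|%R) ltac:(by apply: mA; apply: mI))); last first.
  by move=> z; rewrite lee_fin normr_ge0.
have -> : \int[distribution P X]_x \int[distribution P Y]_y (((x, y).1 + (x, y).2) ^+ 2)%:E
    = \int[distribution P X]_x (GQ (distribution P Y) x)%:E.
  apply: eq_integral => x _ /=.
  by rewrite (I_EFin hY (f := fun y => ((x + y) ^+ 2)%R)) //; quadt.
have -> : \int[distribution P X]_x \int[distribution P Y]_y `|(x, y).1 + (x, y).2|%:E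
    = \int[distribution P X]_x (HQ (distribution P Y) x)%:E.
  apply: eq_integral => x _ /=.
  by rewrite (I_EFin hY (f := fun y => `|x + y|%R)) //; quadt.
rewrite (I_EFin hX (GQ_quad hY)) (I_EFin hX (linQ (HQ_lin hY))).
by rewrite -EFin_expe -EFinB.
Qed.
End final4.

Lemma indep_sym d (T : measurableType d) (R : realType) (P : probability T R)
  (X Y : {RV P >-> R}) : independent_RV2 X Y -> independent_RV2 Y X.
Proof. by move=> iXY A B mA mB; rewrite setIC iXY // muleC. Qed.

Lemma half d (T : measurableType d) (R : realType) (P : probability T R)
  (X Y : {RV P >-> R}) : independent_RV2 X Y ->
  (X : T -> R) \in Lfun P 2%:E -> (Y : T -> R) \in Lfun P 2%:E ->
  ('V_P[fun w => `|X w + fine 'E_P[Y]|%R] * (4^-1)%:E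
     <= 'V_P[fun w => `|X w + Y w|%R])%E.
Proof.
move=> iXY X2 Y2.
rewrite (V1 X2) (V2 iXY X2 Y2) (meanE Y2) -EFinM lee_fin.
have := main_ineq (dist2 X2) (dist2 Y2).
lra.
Qed.

Theorem lemma5 (R : realType) :
  exists K0 : R, 0 < K0 <= 4 /\
    forall (d : measure_display) (T : measurableType d) (P : probability T R)
      (X Y : {RV P >-> R}),
      independent_RV2 X Y ->
      (X : T -> R) \in Lfun P 2%:E -> (Y : T -> R) \in Lfun P 2%:E ->
      (maxe 'V_P[fun w => `|X w + fine 'E_P[Y]|%R]
            'V_P[fun w => `|Y w + fine 'E_P[X]|%R] * (K0^-1)%:E
        <= 'V_P[fun w => `|X w + Y w|%R])%E.
Proof.
exists 4; split; first by rewrite ltr0n lexx.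
move=> d T P X Y iXY X2 Y2.
have h1 := half iXY X2 Y2.
have h2 := half (indep_sym iXY) Y2 X2.
have e : (fun w => `|Y w + X w|%R) = (fun w => `|X w + Y w|%R).
  by apply/funext => w; rewrite addrC.
rewrite e in h2.
rewrite maxEle; case: ifP => _ //.
Qed.
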